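(* Consider the patient model in the context and let $z_t:=[x_t\ u_t^\top\ d_t^\top]^\top$. With $\bar\Gamma:=(C_x^2+2)I_{2M+1}$, where $C_x:=\frac{\bar b+\bar c+\bar w}{1-\bar a}$, we have $\mathbf P\big[\sum_{t=1}^Tz_tz_t^\top\not\preceq T\bar\Gamma\big]=0$, i.e. $\sum_{t=1}^Tz_tz_t^\top\preceq T\bar\Gamma$ almost surely.
   Context: Patient model: $M\geq1$ treatments; $\mathcal U:=\{v\in\{0,1\}^M:\|v\|_0\leq1\}$. State $x_t\in\mathbb R$ evolves as $x_{t+1}=ax_t+b^\top u_t+c^\top d_t+w_t$, with actions $u_t\in\mathcal U$ and adherence $d_t\in\mathcal U$, $d^i_t\mid x_t,u^i_t\sim\mathrm{Bernoulli}(u^i_t\sigma(x_t+\mu_i))$, $\sigma$ the sigmoid. Parameters: $a\in[0,\bar a]$, known $\bar a\in(0,1)$, $\|b\|_\infty\leq\bar b$, $\|c\|_\infty\leq\bar c$, $\mu\in[-\bar\mu,\bar\mu]^M$. $x_t,u_t,d_t$ fully observed. Noise $w_t$ i.i.d., zero-symmetric, $\sigma_s^2$-subgaussian, $|w_t|\leq\bar w$ ($\bar w>0$), log-concave density, known variance $\sigma_w^2>0$; $x_1$ distributed as $w_t$. $\preceq$ is the Loewner order. *)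

(* Defs.v *)
From HB Require Import structures.
From mathcomp Require Import all_boot all_order all_algebra.
From mathcomp Require Import all_classical all_reals all_analysis.
Set Implicit Arguments. Unset Strict Implicit. Unset Printing Implicit Defensive.
Import Order.TTheory GRing.Theory Num.Theory.
Local Open Scope classical_set_scope.
Local Open Scope ring_scope.

Section Defs.
Context (R : realType).

Definition loewner_le (n : nat) (A B : 'M[R]_n) : Prop :=
  forall v : 'cV[R]_n, (v^T *m A *m v) 0 0 <= (v^T *m B *m v) 0 0.

Definition in_U (M : nat) (v : 'cV[R]_M) : Prop :=
  (forall i, v i ord0 = 0 \/ v i ord0 = 1) /\ (#|[pred i | v i ord0 != 0%R]| <= 1)%N.

Definition sigmoid (y : R) : R := (1 + expR (- y))^-1.

Definition log_concave (f : R -> R) : Prop :=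
  forall (y z th : R), 0 <= th <= 1 ->
    f y `^ (1 - th) * f z `^ th <= f ((1 - th) * y + th * z).

End Defs.

Section Model.
Context (dT : measure_display) (Omega : measurableType dT) (R : realType)
  (P : probability Omega R).

Definition mutually_independent (X : nat -> Omega -> R) : Prop :=
  forall (s : seq nat) (B : nat -> set R), uniq s -> all (fun t => 0 < t)%N s ->
    (forall t, measurable (B t)) ->
    P (\big[setI/setT]_(t <- s) (X t @^-1` B t)) =
    (\prod_(t <- s) P (X t @^-1` B t))%E.

Definition has_logconcave_density (X : Omega -> R) : Prop :=
  exists f : R -> R, measurable_fun setT f /\ (forall y, 0 <= f y) /\
    log_concave f /\
    forall B : set R, measurable B ->
      P (X @^-1` B) = (\int[@lebesgue_measure R]_(y in B) (f y)%:E)%E.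

Definition subgaussian (s2 : R) (X : Omega -> R) : Prop :=
  forall lam : R,
    (\int[P]_w (expR (lam * X w))%:E <= (expR (lam ^+ 2 * s2 / 2))%:E)%E.

(* All standing assumptions of the patient model (time starts at t = 1). *)
Definition patient_model (M : nat) (abar bbar cbar mubar wbar sigma_s sigma_w : R)
  (a : R) (b c mu : 'cV[R]_M)
  (x : nat -> Omega -> R) (u d : nat -> Omega -> 'cV[R]_M)
  (w : nat -> Omega -> R) : Prop :=
  [/\
      [/\ 0 < abar < 1, 0 <= a <= abar,
          (forall i, `|b i ord0| <= bbar), (forall i, `|c i ord0| <= cbar)
        & (forall i, - mubar <= mu i ord0 <= mubar)],
      (forall t, measurable_fun setT (x t) /\ measurable_fun setT (w t) /\
         (forall i, measurable_fun setT (fun o => u t o i ord0)) /\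
         (forall i, measurable_fun setT (fun o => d t o i ord0))),
      [/\ (forall t o, (0 < t)%N -> in_U (u t o) /\ in_U (d t o)),
      (forall t o, (0 < t)%N ->
         x t.+1 o = a * x t o + (b^T *m u t o) 0 0 + (c^T *m d t o) 0 0 + w t o) &
      (* adherence: d^i_t | x_t, u^i_t ~ Bernoulli(u^i_t sigmoid(x_t + mu_i)) *)
      (forall t i, (0 < t)%N ->
         (forall A : set R, measurable A ->
            P [set o | A (x t o) /\ u t o i ord0 = 1 /\ d t o i ord0 = 1] =
            (\int[P]_(o in [set o | A (x t o) /\ u t o i ord0 = 1%R])
                (sigmoid (x t o + mu i ord0))%:E)%E) /\
         P [set o | u t o i ord0 = 0 /\ d t o i ord0 = 1] = 0%E)],
      [/\ mutually_independent w,
          (forall t (B : set R), (0 < t)%N -> measurable B ->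
             P (w t @^-1` B) = P (w 1%N @^-1` B) /\
             P (w t @^-1` B) = P ((fun o => - w t o) @^-1` B)),
          (forall t, (0 < t)%N -> subgaussian (sigma_s ^+ 2) (w t)),
          0 < wbar /\ (forall t, (0 < t)%N -> {ae P, forall o, `|w t o| <= wbar}) &
          (forall t, (0 < t)%N -> has_logconcave_density (w t) /\
             'V_P[w t] = (sigma_w ^+ 2)%:E)] &
      0 < sigma_w ^+ 2 /\
      (forall B : set R, measurable B -> P (x 1%N @^-1` B) = P (w 1%N @^-1` B))].

End Model.

Definition zvec (R : realType) (M : nat) (xt : R) (ut dt : 'cV[R]_M)
  : 'cV[R]_(1 + M + M) := col_mx (col_mx (xt%:M : 'M[R]_1) ut) dt.

Definition Cx (R : realType) (abar bbar cbar wbar : R) : R :=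
  (bbar + cbar + wbar) / (1 - abar).

(* Main.v *)
Require Import Defs.
From HB Require Import structures.
From mathcomp Require Import all_boot all_order all_algebra.
From mathcomp Require Import all_classical all_reals all_analysis.
From mathcomp Require Import ring lra.
Import Order.TTheory GRing.Theory Num.Theory.
Local Open Scope classical_set_scope.
Local Open Scope ring_scope.

Section H.
Context (R : realType).

Lemma cs_sum n (f g : 'I_n -> R) :
  (\sum_i f i * g i) ^+ 2 <= (\sum_i f i ^+ 2) * (\sum_i g i ^+ 2).
Proof.
have E : \sum_i \sum_j (f i * g j - f j * g i) ^+ 2 =
  2 * ((\sum_i f i ^+ 2) * (\sum_i g i ^+ 2) - (\sum_i f i * g i) ^+ 2).
  have -> : \sum_i \sum_j (f i * g j - f j * g i) ^+ 2 =
    \sum_i \sum_j (f i ^+ 2 * g j ^+ 2) + \sum_i \sum_j (f j ^+ 2 * g i ^+ 2)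
    - 2 * \sum_i \sum_j (f i * g i * (f j * g j)).
    rewrite mulr_sumr -big_split -sumrB /=; apply: eq_bigr => i _.
    rewrite mulr_sumr -big_split -sumrB /=; apply: eq_bigr => j _.
    ring.
  rewrite (exchange_big _ _ _ _ _ (fun i j => f j ^+ 2 * g i ^+ 2)) /=.
  rewrite -!big_distrlr /= expr2; ring.
have : 0 <= \sum_i \sum_j (f i * g j - f j * g i) ^+ 2.
  by apply: sumr_ge0 => i _; apply: sumr_ge0 => j _; exact: sqr_ge0.
rewrite E pmulr_rge0 // subr_ge0 //.
Qed.

Lemma inU_abs M (v : 'cV[R]_M) : in_U v -> \sum_i `|v i ord0| <= 1.
Proof.
move=> [H1 H2].
have -> : \sum_i `|v i ord0| = \sum_i ((v i ord0 != 0)%:R : R).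
  apply: eq_bigr => i _; case: (H1 i) => ->; rewrite ?eqxx ?normr0 ?normr1 //.
  by rewrite oner_eq0.
rewrite -natr_sum (_ : 1 = 1%:R) // ler_nat.
rewrite -(sum1_card [pred i | v i ord0 != 0]) in H2.
apply: (leq_trans _ H2); rewrite [X in (_ <= X)%N]big_mkcond /=.
by apply: leq_sum => i _; rewrite inE; case: (v i ord0 != 0).
Qed.

Lemma inU_sq M (v : 'cV[R]_M) : in_U v -> \sum_i (v i ord0) ^+ 2 <= 1.
Proof.
move=> H; apply: (le_trans _ (@inU_abs _ _ H)); apply: ler_sum => i _.
by case: (H.1 i) => ->; rewrite ?normr0 ?normr1 ?expr0n ?expr1n.
Qed.

Lemma inU_dot M (v b : 'cV[R]_M) (bb : R) : in_U v -> 0 <= bb ->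
  (forall i, `|b i ord0| <= bb) -> `|(b^T *m v) 0 0| <= bb.
Proof.
move=> H hb hbi; rewrite mxE.
apply: le_trans; first exact: ler_norm_sum.
apply: (@le_trans _ _ (\sum_i bb * `|v i ord0|)).
  apply: ler_sum => i _; rewrite mxE normrM ler_wpM2r //.
by rewrite -mulr_sumr -[leRHS]mulr1 ler_wpM2l // (@inU_abs _ _ H).
Qed.


Lemma dot_eq n (a b : 'cV[R]_n) : (a^T *m b) 0 0 = \sum_i a i 0 * b i 0.
Proof. by rewrite mxE; apply: eq_bigr => i _; rewrite mxE. Qed.

Lemma cs_mx n (a b : 'cV[R]_n) :
  ((a^T *m b) 0 0) ^+ 2 <= (a^T *m a) 0 0 * (b^T *m b) 0 0.
Proof.
rewrite !dot_eq.
have E : forall c : 'cV[R]_n, \sum_i c i 0 * c i 0 = \sum_i c i 0 ^+ 2.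
  by move=> c; apply: eq_bigr => i _; rewrite expr2.
rewrite !E; exact: (@cs_sum _ (fun i => a i 0) (fun i => b i 0)).
Qed.

Lemma loew_sum n (T : nat) (z : nat -> 'cV[R]_n) (K : R) :
  (forall t, (1 <= t < T.+1)%N -> ((z t)^T *m z t) 0 0 <= K) ->
  loewner_le (\sum_(1 <= t < T.+1) z t *m (z t)^T) (T%:R *: K%:M).
Proof.
move=> hz v.
rewrite mulmx_sumr mulmx_suml summxE.
have -> : (v^T *m (T%:R *: K%:M) *m v) 0 0 = \sum_(1 <= t < T.+1) K * (v^T *m v) 0 0.
  rewrite sumr_const_nat subn1 /= -scalemxAr mul_mx_scalar -scalemxAl mxE.
  by rewrite -scalemxAl mxE mulr_natl.
rewrite big_nat [X in _ <= X]big_nat; apply: ler_sum => t ht.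
rewrite mulmxA -mulmxA.
have h1 : (v^T *m z t *m ((z t)^T *m v)) 0 0 = ((v^T *m z t) 0 0) ^+ 2.
  rewrite [LHS]mxE big_ord1 expr2; congr (_ * _).
  by rewrite -[v]trmxK -trmx_mul mxE trmxK.
rewrite h1; apply: (le_trans (cs_mx _ v (z t))).
rewrite mulrC ler_wpM2r //.
  rewrite dot_eq; apply: sumr_ge0 => i _; by rewrite -expr2 sqr_ge0.
by apply: hz.
Qed.

Lemma zvec_norm M (xt : R) (ut dt : 'cV[R]_M) :
  ((zvec xt ut dt)^T *m zvec xt ut dt) 0 0 =
  xt ^+ 2 + \sum_i ut i 0 ^+ 2 + \sum_i dt i 0 ^+ 2.
Proof.
have E : forall (A B : 'M[R]_1), (A + B) 0 0 = A 0 0 + B 0 0 by move=> A B; rewrite mxE.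
rewrite /zvec !tr_col_mx !mul_row_col !E tr_scalar_mx mul_scalar_mx !dot_eq !mxE eqxx mulr1n expr2.
by congr (_ + _ + _); apply: eq_bigr => i _; rewrite expr2.
Qed.

Lemma zvec_bound M (xt C : R) (ut dt : 'cV[R]_M) :
  `|xt| <= C -> in_U ut -> in_U dt ->
  ((zvec xt ut dt)^T *m zvec xt ut dt) 0 0 <= C ^+ 2 + 2.
Proof.
move=> hx hu hd; rewrite zvec_norm -addrA lerD //.
  by rewrite -real_normK ?num_real // lerXn2r // ?nnegrE // (le_trans _ hx).
by rewrite (_ : 2 = 1 + 1) // lerD // inU_sq.
Qed.
End H.

Theorem proposition3 (dT : measure_display) (Omega : measurableType dT)
  (R : realType) (P : probability Omega R) (M : nat)
  (abar bbar cbar mubar wbar sigma_s sigma_w a : R) (b c mu : 'cV[R]_M)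
  (x : nat -> Omega -> R) (u d : nat -> Omega -> 'cV[R]_M)
  (w : nat -> Omega -> R) :
  (1 <= M)%N ->
  patient_model P abar bbar cbar mubar wbar sigma_s sigma_w a b c mu x u d w ->
  forall Tn : nat,
  {ae P, forall o,
    loewner_le
      (\sum_(1 <= t < Tn.+1) zvec (x t o) (u t o) (d t o) *m (zvec (x t o) (u t o) (d t o))^T)
      (Tn%:R *: ((Cx abar bbar cbar wbar ^+ 2 + 2)%:M : 'M[R]_(1 + M + M)))}.
Proof.
move=> hM [[habar ha hb hc hmu] hmeas [hU hdyn _] [_ _ _ [hw0 hwae] _] [_ hx1]] Tn.
set C := Cx abar bbar cbar wbar.
have hb0 : 0 <= bbar by apply: le_trans (hb (Ordinal hM)).
have hc0 : 0 <= cbar by apply: le_trans (hc (Ordinal hM)).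
have ha1 : 0 < 1 - abar by rewrite subr_gt0; case/andP: habar.
have hC : C = abar * C + (bbar + cbar + wbar).
  rewrite /C /Cx; field; lra.
have hwC : wbar <= C.
  rewrite /C /Cx ler_pdivlMr //; nra.
have hC0 : 0 <= C by apply: le_trans hwC; apply: ltW.
have x1ae : {ae P, forall o, `|x 1%N o| <= wbar}.
  case: (hwae 1%N isT) => N [mN PN0 sN].
  pose B : set R := setT `&` (Num.norm @^-1` `]wbar, +oo[%classic).
  have mB : measurable B by apply: measurable_realfun.normr_measurable => //; exact: measurable_itv.
  have hBy : forall y, B y <-> wbar < `|y|.
    by move=> y; rewrite /B /= in_itv /= andbT; split => [[_ ->]|->].
  have mw1 : measurable (w 1%N @^-1` B).
    by rewrite -[_ @^-1` _]setTI; apply: (hmeas 1%N).2.1.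
  have mx1 : measurable (x 1%N @^-1` B).
    by rewrite -[_ @^-1` _]setTI; apply: (hmeas 1%N).1.
  have Pw : P (w 1%N @^-1` B) = 0%E.
    apply: (subset_measure0 mw1 mN _ PN0) => o /= /hBy hlt; apply: sN => /=.
    by apply/negP; rewrite -ltNge.
  exists (x 1%N @^-1` B); split => //; first by rewrite hx1.
  move=> o /= hno; apply/hBy; rewrite ltNge; exact/negP.
have claim : forall n, {ae P, forall o, forall t, (1 <= t <= n)%N -> `|x t o| <= C}.
  elim=> [|n IH].
    by apply: aeW => o t /andP[h1 h2]; move: (leq_trans h1 h2).
  have hwn : {ae P, forall o, (0 < n)%N -> `|w n o| <= wbar}.
    case: n IH => [|n] IH; first by apply: aeW.
    by apply: filterS (hwae n.+1 isT) => o h _.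
  move: IH x1ae hwn; apply: filterS3 => o IHo x1o hwo t /andP[t1 tn].
  have [tle|tgt] := leqP t n; first by apply: IHo; rewrite t1 tle.
  have -> : t = n.+1 by apply/eqP; rewrite eqn_leq tn tgt.
  case: n IHo tn tgt hwo => [|n] IHo tn tgt hwo; first by apply: le_trans x1o hwC.
  have [hu hd] := hU n.+1 o isT.
  rewrite hdyn // hC.
  have h1 : `|a * x n.+1 o| <= abar * C.
    rewrite normrM ger0_norm; last by case/andP: ha.
    apply: (@le_trans _ _ (a * C)).
      apply: ler_wpM2l; first by case/andP: ha.
      by apply: IHo; rewrite leqnn.
    by apply: ler_wpM2r => //; case/andP: ha.
  have h2 := @inU_dot _ _ _ _ _ hu hb0 hb.
  have h3 := @inU_dot _ _ _ _ _ hd hc0 hc.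
  have h4 := hwo isT.
  apply: (le_trans (ler_normD _ _)).
  apply: (le_trans (lerD (le_trans (ler_normD _ _) (lerD (ler_normD _ _) (lexx _))) (lexx _))).
  lra.
apply: filterS3 (claim Tn) (aeW _ (fun o => I)) (aeW _ (fun o => I)) => o hx _ _.
apply: loew_sum => t ht.
have [hu hd] := hU t o (andP ht).1.
apply: zvec_bound => //; apply: hx.
by case/andP: ht => -> /=; rewrite ltnS.
Qed.
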